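(* Let $\mathcal{P}=\{\mathsf{R}\}$ with $\mathrm{ar}(\mathsf{R})=1$ and $[\![\mathsf{R}]\!]\subseteq\mathbb{N}$ rich. Let $n\in\mathbb{N}$ and let $\psi\in\mathrm{FOC}(\mathcal{P}\cup\{\mathsf{P}_\exists\})[\sigma_{\mathrm{tree}}]$ be a linear hnf-sentence such that for all $\mathcal{T}_n$-forests $\mathcal{F}$ we have $\mathcal{F}\models\psi\iff P_{[\![\mathsf{R}]\!]}(\mathcal{F})$. Then the number of distinct atomic numerical oc-type conditions of the form $\mathsf{R}(t)$ in $\psi$ is at least the number of non-empty sets $B\subseteq\mu(\mathcal{T}_n)$.
   Context: $\sigma_{\mathrm{tree}}=\{E_0,E_1,X\}$ with $E_0,E_1$ binary, $X$ unary. $\mathcal{T}_n$ is the set of all structures $T=(D,E_0,E_1,X)$ where $D$ is the set of binary words of length at most $2^n$, $E_b=\{(w,wb):wb\in D\}$ for $b\in\{0,1\}$, and $X\subseteq D$ arbitrary. $T$ is marked if the empty word $\varepsilon\in X$, unmarked otherwise; $\mu(T)$ is $T$ with $X$ replaced by $X\cup\{\varepsilon\}$, $\mu(\mathcal{T}_n)=\{\mu(T):T\in\mathcal{T}_n\}$. A $\mathcal{T}_n$-forest is a disjoint union of finitely many copies of trees from $\mathcal{T}_n$. For $R\subseteq\mathbb{N}$, $P_R(\mathcal{F})$ is the property: the number of unmarked trees $T$ (counted with multiplicity of copies) in $\mathcal{F}$ such that $\mu(T)$ also appears in $\mathcal{F}$ belongs to $R$. A set $R\subseteq\mathbb{N}$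 is rich if for all $s,u,v\in\mathbb{N}$, $\bar a_0\in\{0,1\}^s\setminus\{\bar0\}$, $\bar a_1,\dots,\bar a_u\in\mathbb{N}^s$, $c_1,\dots,c_u\in\mathbb{N}$ with $(\bar a_0,0)\ne(\bar a_i,c_i)$ for all $i$, there exist $\bar x,\bar y\in(v+\mathbb{N})^s$ with $\bar a_0^\top\bar x\in R\iff\bar a_0^\top\bar y\notin R$ and $\bar a_i^\top\bar x-c_i\in R\iff\bar a_i^\top\bar y-c_i\in R$ for all $i\in\{1,\dots,u\}$. $\mathsf{P}_\exists$ is the unary predicate with semantics $\{1,2,\dots\}$. $\mathrm{FOC}(\mathcal{Q})[\sigma]$: formulas and counting terms built from atomic first-order formulas, $\neg,\vee$, $\exists y$, $\mathsf{P}(t_1,\dots,t_m)$ (true iff the values of the counting terms lie in $[\![\mathsf{P}]\!]$), counting terms $\#\bar y.\varphi$ (number of tuples satisfying $\varphi$), integers, $+$, $\cdot$. A counting term is linear if it is an integer $i\in\mathbb{N}$ or of the form $\sum_{j=1}^m b_j\cdot\#(y).\varphi_j-b_0$ with $b_0,\dots,b_m\in\mathbb{N}$; a formula is linear if it only uses linear counting terms. An $r$-type with one centre is a structure with a distinguished element such that every element is within Gaifman distance $r$ of it (Gaifman graph: edges between distinct elements occurring together in a tuple); $\mathrm{sph}_\tau(y)$ is a first-order formula stating that the substructure induced on the elements within distance $r$ of $y$, centred at $y$, is isomorphic to $\tau$. Basic counting terms are $\#(y).\mathrm{sph}_\tau(y)$; simple counting terms are integer polynomials in them; atomic numerical oc-type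 conditions are $\mathsf{P}(t_1,\dots,t_m)$ with $\mathsf{P}\in\mathcal{P}\cup\{\mathsf{P}_\exists\}$ and simple counting terms $t_i$; a hnf-sentence of $\mathrm{FOC}(\mathcal{P}\cup\{\mathsf{P}_\exists\})$ is a Boolean combination of atomic numerical oc-type conditions. The number of distinct atomic numerical oc-type conditions of the form $\mathsf{R}(t)$ in $\psi$ is the number of distinct such conditions $\psi$ is a Boolean combination of. *)

(* Defs.v *)
From HB Require Import structures.
From mathcomp Require Import all_boot all_order all_algebra.
Set Implicit Arguments. Unset Strict Implicit. Unset Printing Implicit Defensive.
Import Order.TTheory GRing.Theory Num.Theory.

Record sstruct := SStruct {
  sV : finType;
  sE0 : rel sV;
  sE1 : rel sV;
  sX : pred sV }.

Definition gadj (A : sstruct) (x z : sV A) : bool :=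
  (x != z) && [|| sE0 x z, sE0 z x, sE1 x z | sE1 z x].

Fixpoint ball (A : sstruct) (r : nat) (y : sV A) : {set sV A} :=
  match r with
  | 0 => [set y]
  | r'.+1 => ball r' y :|: [set z | [exists x in ball r' y, gadj x z]]
  end.

(* Types with one centre (syntactic objects): a finite structure on    *)
(* 'I_k with a distinguished element (the centre).                    *)
Definition otdata (k : nat) : eqType :=
  ('I_k * {set 'I_k * 'I_k} * {set 'I_k * 'I_k} * {set 'I_k})%type.
Definition otype : eqType := {k : nat & otdata k}.

Definition ot_k (t : otype) : nat := tag t.
Definition ot_c (t : otype) : 'I_(ot_k t) := (tagged t).1.1.1.
Definition ot_E0 (t : otype) : {set 'I_(ot_k t) * 'I_(ot_k t)} := (tagged t).1.1.2.
Definition ot_E1 (t : otype) : {set 'I_(ot_k t) * 'I_(ot_k t)} := (tagged t).1.2.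
Definition ot_X (t : otype) : {set 'I_(ot_k t)} := (tagged t).2.

Definition ot_struct (t : otype) : sstruct :=
  @SStruct 'I_(ot_k t) (fun u v => (u, v) \in ot_E0 t)
           (fun u v => (u, v) \in ot_E1 t) (fun u => u \in ot_X t).

Definition is_rtype (r : nat) (t : otype) : bool :=
  ball (A := ot_struct t) r (ot_c t) == setT.

(* sph_{r,t}(y): the substructure of A induced on the r-ball around y,
   centred at y, is isomorphic to t (as centred structures). *)
Definition sph (A : sstruct) (r : nat) (t : otype) (y : sV A) : bool :=
  [exists f : {ffun 'I_(ot_k t) -> sV A},
    [&& injectiveb f, f (ot_c t) == y,
        [forall z, (z \in ball r y) == (z \in codom f)],
        [forall u, forall v, sE0 (f u) (f v) == ((u, v) \in ot_E0 t)],
        [forall u, forall v, sE1 (f u) (f v) == ((u, v) \in ot_E1 t)] &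
        [forall u, sX (f u) == (u \in ot_X t)]]].

Definition bcount (A : sstruct) (r : nat) (t : otype) : nat :=
  #|[set y : sV A | sph r t y]|.

(* Linear counting terms whose basic terms are #(y).sph_{r,t}(y):
   LConst i            ==  the integer i in N
   LSum b0 [:: (b_1,(r_1,t_1)); ...; (b_m,(r_m,t_m))]
                       ==  sum_j b_j * #(y).sph_{r_j,t_j}(y) - b0           *)
Inductive lterm :=
| LConst of nat
| LSum of nat & seq (nat * (nat * otype)).

Definition lterm_enc (t : lterm) : nat + nat * seq (nat * (nat * otype)) :=
  match t with LConst i => inl i | LSum b0 l => inr (b0, l) end.
Definition lterm_dec (e : nat + nat * seq (nat * (nat * otype))) : lterm :=
  match e with inl i => LConst i | inr (b0, l) => LSum b0 l end.
Lemma lterm_encK : cancel lterm_enc lterm_dec. Proof. by case. Qed.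
HB.instance Definition _ := Equality.copy lterm (can_type lterm_encK).

Inductive atom :=
| AR of lterm
| AEx of lterm.

Inductive hnf :=
| HAtom of atom
| HNot of hnf
| HOr of hnf & hnf.

Definition lterm_wf (t : lterm) : bool :=
  match t with
  | LConst _ => true
  | LSum _ l => all (fun p => is_rtype p.2.1 p.2.2) l
  end.
Definition atom_wf (a : atom) : bool :=
  match a with AR t => lterm_wf t | AEx t => lterm_wf t end.
Fixpoint hnf_wf (h : hnf) : bool :=
  match h with
  | HAtom a => atom_wf a
  | HNot h' => hnf_wf h'
  | HOr h1 h2 => hnf_wf h1 && hnf_wf h2
  end.

Fixpoint R_atoms (h : hnf) : seq lterm :=
  match h with
  | HAtom (AR t) => [:: t]
  | HAtom (AEx _) => [::]
  | HNot h' => R_atoms h'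
  | HOr h1 h2 => R_atoms h1 ++ R_atoms h2
  end.

Definition num_R_atoms (h : hnf) : nat := size (undup (R_atoms h)).

Definition inR (R : nat -> Prop) (z : int) : Prop :=
  match z with Posz m => R m | Negz _ => False end.

Definition lterm_val (A : sstruct) (t : lterm) : int :=
  match t with
  | LConst i => i%:Z
  | LSum b0 l => (\sum_(p <- l) (p.1 * bcount A p.2.1 p.2.2)%N)%:Z - b0%:Z
  end%R.

Definition atom_sat (R : nat -> Prop) (A : sstruct) (a : atom) : Prop :=
  match a with
  | AR t => inR R (lterm_val A t)
  | AEx t => (0 < lterm_val A t)%R
  end.

Fixpoint hnf_sat (R : nat -> Prop) (A : sstruct) (h : hnf) : Prop :=
  match h with
  | HAtom a => atom_sat R A a
  | HNot h' => ~ hnf_sat R A h'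
  | HOr h1 h2 => hnf_sat R A h1 \/ hnf_sat R A h2
  end.

Definition dotn (s : nat) (a x : 'I_s -> nat) : nat := \sum_(k < s) a k * x k.

Definition rich (R : nat -> Prop) : Prop :=
  forall (s u v : nat) (a0 : 'I_s -> nat) (a : 'I_u -> 'I_s -> nat)
         (c : 'I_u -> nat),
    (forall k, a0 k <= 1) -> (exists k, a0 k != 0) ->
    (forall i, ~ ((forall k, a i k = a0 k) /\ c i = 0)) ->
    exists x y : 'I_s -> nat,
      (forall k, v <= x k /\ v <= y k) /\
      (R (dotn a0 x) <-> ~ R (dotn a0 y)) /\
      (forall i, inR R ((dotn (a i) x)%:Z - (c i)%:Z)%R <->
                 inR R ((dotn (a i) y)%:Z - (c i)%:Z)%R).

Fixpoint words_eq (m : nat) : seq (seq bool) :=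
  match m with
  | 0 => [:: [::]]
  | m'.+1 => [seq b :: w | b <- [:: false; true], w <- words_eq m']
  end.
Definition words_le (L : nat) : seq (seq bool) :=
  flatten [seq words_eq m | m <- iota 0 L.+1].

Definition Dom (n : nat) : finType := seq_sub (words_le (2 ^ n)).

(* A tree T in T_n is determined by its set X subseteq D *)
Definition tree (n : nat) : finType := {set Dom n}.

Definition marked (n : nat) (X : tree n) : bool :=
  [exists w in X, ssval w == [::]].
Definition mu (n : nat) (X : tree n) : tree n :=
  X :|: [set w | ssval w == [::]].

(* the T_n-forest consisting of one copy of each tree of the list s
   (with multiplicity): universe 'I_(size s) * D, with
   E_b = {((i,w),(i,wb))}, X = {(i,w) | w in X of the i-th tree} *)
Definition forest (n : nat) (s : seq (tree n)) : sstruct :=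
  @SStruct ('I_(size s) * Dom n)%type
    (fun p q => (p.1 == q.1) && (ssval q.2 == rcons (ssval p.2) false))
    (fun p q => (p.1 == q.1) && (ssval q.2 == rcons (ssval p.2) true))
    (fun p => p.2 \in nth set0 s p.1).

Definition P_R (R : nat -> Prop) (n : nat) (s : seq (tree n)) : Prop :=
  R (count (fun X => ~~ marked X && (mu X \in s)) s).

(* Main.v *)
Require Import Defs.
From HB Require Import structures.
From mathcomp Require Import all_boot all_order all_algebra.
Set Implicit Arguments. Unset Strict Implicit.
Import Order.TTheory GRing.Theory Num.Theory.

Section Emb.
Variables (A B : sstruct) (phi : sV A -> sV B).
Hypothesis phi_inj : injective phi.
Hypothesis hE0 : forall x y, sE0 (phi x) (phi y) = sE0 x y.
Hypothesis hE1 : forall x y, sE1 (phi x) (phi y) = sE1 x y.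
Hypothesis hX : forall x, sX (phi x) = sX x.
Hypothesis hcl : forall x z, gadj (phi x) z -> exists x', z = phi x'.

Lemma gadj_phi x z : gadj (phi x) (phi z) = gadj x z.
Proof. by rewrite /gadj (inj_eq phi_inj) !hE0 !hE1. Qed.

Lemma ball_phi r y : ball r (phi y) = phi @: ball r y.
Proof.
elim: r => [|r IH] /=; first by rewrite imset_set1.
rewrite IH imsetU; congr (_ :|: _); apply/setP => z; rewrite inE.
apply/existsP/imsetP.
- case=> x' /andP[/imsetP[x0 x0in ->] adj].
  have [z0 ez] := hcl adj; subst z.
  exists z0 => //; rewrite inE; apply/existsP; exists x0.
  by rewrite x0in -gadj_phi.
- case=> z0; rewrite inE => /existsP[x0 /andP[x0in adj]] ->.
  by exists (phi x0); rewrite imset_f //= gadj_phi.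
Qed.

Lemma sph_phi r t y : sph r t (phi y) = sph r t y.
Proof.
apply/idP/idP.
- case/existsP=> f' /andP[finj /and5P[fc fball fE0 fE1 fX]].
  have fin u : f' u \in phi @: ball r y.
    by rewrite -ball_phi (eqP (forallP fball _)) codom_f.
  pose g u := odflt y [pick x | phi x == f' u].
  have gP u : phi (g u) = f' u.
    rewrite /g; case: pickP => [x /eqP //|none].
    by case/imsetP: (fin u) => x _ ex; move: (none x); rewrite ex eqxx.
  apply/existsP; exists [ffun u => g u]; apply/andP; split; [|apply/and5P; split].
  + apply/injectiveP => u v; rewrite !ffunE => e.
    move/injectiveP: finj => finj; by apply: finj; rewrite -!gP e.
  + by rewrite ffunE; apply/eqP/phi_inj; rewrite gP (eqP fc).
  + apply/forallP => z; apply/eqP.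
    rewrite -(mem_imset _ _ phi_inj) -ball_phi (eqP (forallP fball _)).
    apply/codomP/codomP => [[u eu]|[u eu]]; exists u.
    * by rewrite ffunE; apply: phi_inj; rewrite gP.
    * by rewrite -gP eu ffunE.
  + apply/forallP => u; apply/forallP => v; rewrite !ffunE -hE0 !gP.
    exact: (forallP (forallP fE0 u) v).
  + apply/forallP => u; apply/forallP => v; rewrite !ffunE -hE1 !gP.
    exact: (forallP (forallP fE1 u) v).
  + apply/forallP => u; rewrite !ffunE -hX !gP; exact: (forallP fX u).
- case/existsP=> f /andP[finj /and5P[fc fball fE0 fE1 fX]].
  apply/existsP; exists [ffun u => phi (f u)]; apply/andP; split; [|apply/and5P; split].
  + apply/injectiveP => u v; move/injectiveP: finj => finj; rewrite !ffunE => /phi_inj; exact: finj.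
  + by rewrite ffunE (eqP fc).
  + apply/forallP => z; apply/eqP; rewrite ball_phi.
    apply/imsetP/codomP.
    * case=> z0; rewrite (eqP (forallP fball _)) => /codomP[u ->] ->.
      by exists u; rewrite ffunE.
    * case=> u; rewrite ffunE => ->; exists (f u) => //.
      by rewrite (eqP (forallP fball _)) codom_f.
  + apply/forallP => u; apply/forallP => v; rewrite !ffunE hE0.
    exact: (forallP (forallP fE0 u) v).
  + apply/forallP => u; apply/forallP => v; rewrite !ffunE hE1.
    exact: (forallP (forallP fE1 u) v).
  + apply/forallP => u; rewrite !ffunE hX; exact: (forallP fX u).
Qed.
End Emb.

Section Forest.
Variable n : nat.

Lemma sph_forest (s : seq (tree n)) (i : 'I_(size s)) r t (w : Dom n) :
  sph (A := forest s) r t (i, w) =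
  sph (A := forest [:: nth set0 s i]) r t (@ord0 0, w).
Proof.
pose phi := fun p : sV (forest [:: nth set0 s i]) => ((i, p.2) : sV (forest s)).
have o1 : forall j k : 'I_(size [:: nth set0 s i]), j = k.
  by move=> [[|j] Hj] [[|k] Hk] //; apply: val_inj.
have o1b : forall j k : 'I_(size [:: nth set0 s i]), (j == k) = true.
  by move=> j k; rewrite (o1 j k) eqxx.
rewrite -[RHS](@sph_phi _ _ phi) //.
- by move=> [j w1] [k w2] /= [e]; rewrite (o1 j k) e.
- by move=> [j w1] [k w2] /=; rewrite eqxx o1b.
- by move=> [j w1] [k w2] /=; rewrite eqxx o1b.
- by move=> [j w1] /=; rewrite (o1 j ord0).
- move=> [j w1] [k w2]; rewrite /gadj /= => /andP[_ H].
  have ek : i = k.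
    by case/or4P: H => /andP[/eqP ? _].
  by subst k; exists (j, w2).
Qed.

Definition hcnt r t (T : tree n) : nat :=
  \sum_(w : Dom n) (if sph (A := forest [:: T]) r t (@ord0 0, w) then 1 else 0).

Lemma bcount_forest (s : seq (tree n)) r t :
  bcount (forest s) r t = \sum_(Y <- s) hcnt r t Y.
Proof.
rewrite /bcount -sum1_card big_mkcond /=.
rewrite (big_nth set0) big_mkord /hcnt pair_bigA /=.
apply: eq_bigr => [[i w]] _.
by rewrite inE sph_forest.
Qed.


Definition alpha (l : seq (nat * (nat * otype))) (T : tree n) : nat :=
  \sum_(p <- l) p.1 * hcnt p.2.1 p.2.2 T.

Lemma val_forest b0 l (s : seq (tree n)) :
  lterm_val (forest s) (LSum b0 l) = ((\sum_(Y <- s) alpha l Y)%:Z - b0%:Z)%R.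
Proof.
rewrite /= /alpha; congr (_%:Z - _)%R.
rewrite exchange_big /=; apply: eq_bigr => p _.
by rewrite bcount_forest big_distrr.
Qed.

Definition mkF m (tv : 'I_m -> tree n) (x : 'I_m -> nat) : seq (tree n) :=
  flatten [seq nseq (x k) (tv k) | k <- index_enum 'I_m].

Lemma sum_nseq (F : tree n -> nat) c X : \sum_(Y <- nseq c X) F Y = c * F X.
Proof. by elim: c => [|c IH]; rewrite ?big_nil // big_cons IH mulSn. Qed.

Lemma sum_mkF m tv x (F : tree n -> nat) :
  \sum_(Y <- @mkF m tv x) F Y = \sum_(k < m) x k * F (tv k).
Proof.
rewrite /mkF big_flatten big_map /=.
by apply: eq_bigr => k _; rewrite sum_nseq.
Qed.

Lemma count_sum (p : pred (tree n)) s : count p s = \sum_(Y <- s) p Y.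
Proof. by elim: s => [|a s IH]; rewrite ?big_nil // big_cons /= IH. Qed.

Lemma mem_mkF m tv x Y :
  (Y \in @mkF m tv x) = [exists k, (0 < x k) && (tv k == Y)].
Proof.
apply/flatten_mapP/existsP.
- by case=> k _; rewrite mem_nseq => /andP[H /eqP ->]; exists k; rewrite H eqxx.
- case=> k /andP[H /eqP <-]; exists k; first by rewrite mem_index_enum.
  by rewrite mem_nseq H eqxx.
Qed.

Definition epsw : Dom n.
Proof.
apply: (@SeqSub _ _ [::]).
rewrite /words_le; case: (2 ^ n) => [|k] /=; by rewrite ?mem_cat ?inE ?eqxx.
Defined.

Lemma mu_marked (X : tree n) : marked (mu X).
Proof. by apply/existsP; exists epsw; rewrite /mu !inE eqxx orbT. Qed.

Definition epsS : {set Dom n} := [set w | ssval w == [::]].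

Lemma epsS1 (w : Dom n) : (w \in epsS) = (w == epsw).
Proof.
rewrite inE; apply/eqP/eqP => [e|-> //]; by apply: val_inj.
Qed.

Definition unmk (X : tree n) : tree n := X :\: epsS.

Lemma unmk_unmarked (X : tree n) : ~~ marked (unmk X).
Proof.
apply/existsP => [[w]]; rewrite /unmk !inE => /andP[/andP[H _] H2].
by rewrite H2 in H.
Qed.

Lemma mu_unmk (X : tree n) : marked X -> mu (unmk X) = X.
Proof.
move=> /existsP[w /andP[wX /eqP e]].
have ew : w = epsw by apply: val_inj.
apply/setP => z; rewrite /mu /unmk !inE.
case: (boolP (ssval z == [::])) => /= hz; last by rewrite orbF.
have -> : z = epsw by apply: val_inj; exact/eqP.
by rewrite -ew wX.
Qed.

End Forest.

Fixpoint allat (Q : atom -> Prop) (h : hnf) : Prop :=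
  match h with
  | HAtom a => Q a
  | HNot h' => allat Q h'
  | HOr h1 h2 => allat Q h1 /\ allat Q h2
  end.

Lemma allat_mono (Q1 Q2 : atom -> Prop) h :
  (forall a, Q1 a -> Q2 a) -> allat Q1 h -> allat Q2 h.
Proof. by move=> H; elim: h => [a|h IH|h1 IH1 h2 IH2] /=; auto; case; auto. Qed.

Lemma allat_and (Q1 Q2 : atom -> Prop) h :
  allat Q1 h -> allat Q2 h -> allat (fun a => Q1 a /\ Q2 a) h.
Proof. by elim: h => [a|h IH|h1 IH1 h2 IH2] /=; auto; case=> ? ? [] ? ?; auto. Qed.

Lemma allat_sat R (A1 A2 : sstruct) h :
  allat (fun a => atom_sat R A1 a <-> atom_sat R A2 a) h ->
  (hnf_sat R A1 h <-> hnf_sat R A2 h).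
Proof.
elim: h => [a|h IH|h1 IH1 h2 IH2] //=.
- by move=> /IH; tauto.
- by case=> /IH1 ? /IH2 ?; tauto.
Qed.

Fixpoint bmax (h : hnf) : nat :=
  match h with
  | HAtom (AEx (LSum b0 _)) => b0
  | HAtom _ => 0
  | HNot h' => bmax h'
  | HOr h1 h2 => maxn (bmax h1) (bmax h2)
  end.

Lemma allat_R h : allat (fun a => forall t, a = AR t -> t \in R_atoms h) h.
Proof.
elim: h => [a|h IH|h1 IH1 h2 IH2] /=.
- by move=> t ->; rewrite mem_seq1.
- exact: IH.
- split.
  + by apply: allat_mono IH1 => a H t e; rewrite mem_cat (H t e).
  + by apply: allat_mono IH2 => a H t e; rewrite mem_cat (H t e) orbT.
Qed.

Lemma allat_b h : allat (fun a => forall b0 l, a = AEx (LSum b0 l) -> b0 <= bmax h) h.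
Proof.
elim: h => [a|h IH|h1 IH1 h2 IH2] /=.
- by move=> b0 l ->.
- exact: IH.
- split.
  + by apply: allat_mono IH1 => a H b0 l e; rewrite leq_max (H b0 l e).
  + by apply: allat_mono IH2 => a H b0 l e; rewrite leq_max (H b0 l e) orbT.
Qed.

Theorem lemma6p5 (R : nat -> Prop) (n : nat) (psi : hnf) :
  rich R ->
  hnf_wf psi ->
  (forall s : seq (tree n), hnf_sat R (forest s) psi <-> P_R R s) ->
  #|[set B : {set tree n} | (B != set0) && (B \subset [set X | marked X])]|
    <= num_R_atoms psi.
Proof.
move=> Hrich _ Hpsi.
set Bs := [set B : {set tree n} | _].
rewrite /num_R_atoms; set ts := undup (R_atoms psi).
pose u := size ts.
pose P (B : {set tree n}) (i : 'I_u) : bool :=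
  match nth (LConst 0) ts i with
  | LSum b0 l => (b0 == 0) &&
      [forall T : tree n, ~~ marked T ==> (alpha l T == (mu T \in B))]
  | LConst _ => false
  end.
have inj : forall B B' i, B \in Bs -> B' \in Bs -> P B i -> P B' i -> B = B'.
  move=> B B' i; rewrite !inE => /andP[_ sB] /andP[_ sB'].
  rewrite /P; case: (nth _ ts i) => // b0 l /andP[_ /forallP H1] /andP[_ /forallP H2].
  apply/setP => X; case: (boolP (marked X)) => Xm.
    have := implyP (H1 (unmk X)) (unmk_unmarked X).
    have := implyP (H2 (unmk X)) (unmk_unmarked X).
    rewrite mu_unmk // => /eqP -> /eqP.
    by case: (X \in B); case: (X \in B').
  have nB : forall C : {set tree n}, C \subset [set X | marked X] -> X \notin C.
    by move=> C /subsetP sC; apply/negP => /sC; rewrite inE (negbTE Xm).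
  by rewrite (negbTE (nB _ sB)) (negbTE (nB _ sB')).
have key : forall B, B \in Bs -> [exists i, P B i].
  move=> B; rewrite inE => /andP[Bn0 Bsub].
  case: (boolP [exists i, P B i]) => // /existsPn noP; exfalso.
  pose S := [set X : tree n | (X \in B) || ~~ marked X].
  pose tv := fun k : 'I_#|S| => enum_val k.
  have tvS : forall k, tv k \in S by move=> k; exact: enum_valP.
  have inS : forall X, X \in S -> exists k, tv k = X.
    by move=> X H; exists (enum_rank_in H X); exact: enum_rankK_in.
  pose v := (bmax psi).+1.
  pose a0 := fun k => (~~ marked (tv k) && (mu (tv k) \in B) : nat).
  pose a := fun (i : 'I_u) k => match nth (LConst 0) ts i with
                                | LSum _ l => alpha l (tv k) | LConst _ => 0 end.
  pose c := fun (i : 'I_u) => match nth (LConst 0) ts i with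
                                | LSum b0 _ => b0 | LConst _ => 0 end.
  have h1 : forall k, a0 k <= 1 by move=> k; rewrite /a0; case: (_ && _).
  have [k0 hk0] : exists k, a0 k != 0.
    have [X XB] := set0Pn _ Bn0.
    have Xm : marked X by have := subsetP Bsub X XB; rewrite inE.
    have [k ek] : exists k, tv k = unmk X by apply: inS; rewrite inE unmk_unmarked orbT.
    by exists k; rewrite /a0 ek unmk_unmarked mu_unmk // XB.
  have h3 : forall i, ~ ((forall k, a i k = a0 k) /\ c i = 0).
    move=> i [ea ec]; apply: (negP (noP i)); rewrite /P.
    move: ea ec; rewrite /a /c; case: (nth _ ts i) => [m|b0 l] ea ec.
      by move: hk0; rewrite -ea eqxx.
    rewrite ec eqxx /=; apply/forallP => T; apply/implyP => Tu.
    have [k ek] : exists k, tv k = T by apply: inS; rewrite inE Tu orbT.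
    by have := ea k; rewrite /a0 /= ek Tu /= => ->.
  have [x [y [Hv [HR Hi]]]] :=
    Hrich #|S| u v a0 a c h1 (ex_intro _ k0 hk0) h3.
  have memB : forall z : 'I_#|S| -> nat, (forall k, v <= z k) -> forall T,
      [exists k', (0 < z k') && (tv k' == mu T)] = (mu T \in B).
    move=> z zpos T; apply/existsP/idP.
      by case=> k' /andP[_ /eqP e]; have := tvS k'; rewrite e inE mu_marked orbF.
    move=> H; have [k' ek'] : exists k', tv k' = mu T by apply: inS; rewrite inE H.
    by exists k'; rewrite ek' eqxx andbT; apply: leq_trans (zpos k').
  have PRz : forall z, (forall k, v <= z k) ->
      (P_R R (mkF tv z) <-> R (dotn a0 z)).
    move=> z zpos; rewrite /P_R count_sum sum_mkF /dotn.
    suff -> : \sum_(k < #|S|) z k * (~~ marked (tv k) && (mu (tv k) \in mkF tv z))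
              = \sum_(k < #|S|) a0 k * z k by [].
    apply: eq_bigr => k _; rewrite mulnC /a0 mem_mkF memB //.
  have Val : forall z b0 l, lterm_val (forest (mkF tv z)) (LSum b0 l) =
      ((dotn (fun k => alpha l (tv k)) z)%:Z - b0%:Z)%R.
    move=> z b0 l; rewrite val_forest sum_mkF /dotn; congr ((_ : nat)%:Z - _)%R.
    by apply: eq_bigr => k _; rewrite mulnC.
  have Pos : forall z b0 l, (forall k, v <= z k) -> b0 < v ->
      (0 < lterm_val (forest (mkF tv z)) (LSum b0 l))%R =
      [exists k, 0 < alpha l (tv k)].
    move=> z b0 l zpos bv. rewrite (Val z b0 l) subr_gt0 ltz_nat.
    case: (boolP [exists k, 0 < alpha l (tv k)]) => [/existsP[k Hk]|/existsPn H0].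
      apply: (leq_trans bv); apply: (leq_trans (zpos k)).
      rewrite /dotn (bigD1 k) //=; apply: leq_trans (leq_addr _ _).
      by rewrite leq_pmull.
    rewrite /dotn big1 // => k _.
    by have := H0 k; rewrite lt0n negbK => /eqP ->.
  have xpos : forall k, v <= x k by move=> k; case: (Hv k).
  have ypos : forall k, v <= y k by move=> k; case: (Hv k).
  have agree : allat (fun ta => atom_sat R (forest (mkF tv x)) ta <->
                               atom_sat R (forest (mkF tv y)) ta) psi.
    apply: allat_mono (allat_and (allat_R psi) (allat_b psi)).
    move=> [t|t] [H1 H2].
    - case: t H1 H2 => [m|b0 l] H1 _; first by [].
      have tin : LSum b0 l \in ts by rewrite mem_undup; exact: H1.
      pose i : 'I_u := Ordinal (etrans (index_mem _ _) tin).
      have ei : nth (LConst 0) ts i = LSum b0 l by exact: nth_index.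
      have := Hi i; rewrite /a /c ei.
      by rewrite /atom_sat !Val.
    - case: t H1 H2 => [m|b0 l] _ H2; first by [].
      have bv : b0 < v by rewrite ltnS; exact: (H2 _ _ erefl).
      by rewrite /atom_sat !Pos.
  have := allat_sat agree.
  have e1 := Hpsi (mkF tv x); have e2 := Hpsi (mkF tv y).
  have p1 := PRz _ xpos; have p2 := PRz _ ypos.
  move: HR e1 e2 p1 p2; tauto.
case: (set_0Vmem Bs) => [->|[B0 B0in]]; first by rewrite cards0.
have [i0 _] := existsP (key B0 B0in).
pose W B := odflt i0 [pick i | P B i].
have WP : forall B, B \in Bs -> P B (W B).
  move=> B HB; rewrite /W; case: pickP => [i // | none].
  by have [i Hi] := existsP (key B HB); move: (none i); rewrite Hi.
rewrite -(@card_in_imset _ _ W).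
  by apply: leq_trans (max_card _) _; rewrite card_ord.
move=> B B' HB HB' e; apply: (inj B B' (W B)) => //; first exact: WP.
by rewrite e; exact: WP.
Qed.
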